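(* Let $f:2^V\to\mathbb{R}$ be a monotone non-decreasing submodular function with $f(\emptyset)=0$. Then for every $x\in[0,1]^n$ and every permutation $\sigma$ of $V$, $$d_{\hat f}(x\|\sigma)\le \epsilon\, n\Big(\max_{j\in V} f(\{j\})-\min_{j\in V} f(j\mid V\setminus\{j\})\Big)\le \epsilon\, n\max_{j\in V} f(\{j\}),$$ where $\epsilon=\max_{i,j\in V}|x_i-x_j|$ and $f(j\mid A)=f(A\cup\{j\})-f(A)$.
   Context: Let $V=\{1,\dots,n\}$. A permutation $\sigma$ is a bijection $V\to V$, where $\sigma(i)$ is the element placed at rank $i$. Write $S^\sigma_0=\emptyset$, $S^\sigma_j=\{\sigma(1),\dots,\sigma(j)\}$. For $f:2^V\to\mathbb{R}$ define $h^f_\sigma\in\mathbb{R}^n$ by $h^f_\sigma(\sigma(j))=f(S^\sigma_j)-f(S^\sigma_{j-1})$. For $x\in\mathbb{R}^n$, $\sigma_x$ orders $x$ if $x(\sigma_x(1))\ge\cdots\ge x(\sigma_x(n))$; the Lovász extension is $\hat f(x)=\langle x,h^f_{\sigma_x}\rangle$ (independent of the choice of $\sigma_x$). The LB divergence is $d_{\hat f}(x\|\sigma)=\hat f(x)-\langle x,h^f_\sigma\rangle$ for $x\in[0,1]^n$. *)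

(* Defs.v *)
(* V = {1..n} is modelled as 'I_n (0-based). *)
From HB Require Import structures.
From mathcomp Require Import all_boot all_order all_algebra all_fingroup.
Set Implicit Arguments. Unset Strict Implicit. Unset Printing Implicit Defensive.
Import Order.TTheory GRing.Theory Num.Theory.
Local Open Scope ring_scope.

Section Defs.
Variables (R : realFieldType) (n : nat).
Implicit Types (f : {set 'I_n} -> R) (s : {perm 'I_n}) (x : 'I_n -> R).

Definition prefix s (j : nat) : {set 'I_n} := [set s i | i : 'I_n & (i < j)%N].

(* h^f_s (s(j)) = f(S_{j+1}) - f(S_j) (0-based ranks) *)
Definition hvec f s (v : 'I_n) : R :=
  f (prefix s ((s^-1)%g v).+1) - f (prefix s ((s^-1)%g v)).

Definition orders s x : bool :=
  [forall i : 'I_n, forall j : 'I_n, (i <= j)%N ==> (x (s j) <= x (s i))].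

Definition inner x (y : 'I_n -> R) : R := \sum_(i : 'I_n) x i * y i.

(* a permutation ordering x (one always exists); identity as dummy default *)
Definition order_perm x : {perm 'I_n} :=
  odflt 1%g [pick s : {perm 'I_n} | orders s x].

Definition lovasz f x : R := inner x (hvec f (order_perm x)).

Definition LBdiv f x s : R := lovasz f x - inner x (hvec f s).

Definition monotone_set f : Prop := forall A B : {set 'I_n}, A \subset B -> f A <= f B.
Definition submodular f : Prop :=
  forall A B : {set 'I_n}, f (A :|: B) + f (A :&: B) <= f A + f B.

Definition marg f (j : 'I_n) (A : {set 'I_n}) : R := f (j |: A) - f A.

Definition in01 x : Prop := forall i, 0 <= x i <= 1.

Definition spread x : R :=
  \big[Num.max/0]_(i : 'I_n) \big[Num.max/0]_(j : 'I_n) `|x i - x j|.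
End Defs.

Definition max_single (R : realFieldType) (n : nat) (f : {set 'I_n.+1} -> R) : R :=
  \big[Num.max/f [set ord0]]_(j : 'I_n.+1) f [set j].
Definition min_last_marg (R : realFieldType) (n : nat) (f : {set 'I_n.+1} -> R) : R :=
  \big[Num.min/marg f ord0 (~: [set ord0])]_(j : 'I_n.+1) marg f j (~: [set j]).

(* Main.v *)
Require Import Defs.
From HB Require Import structures.
From mathcomp Require Import all_boot all_order all_algebra all_fingroup.
From mathcomp Require Import lra ring.
Set Implicit Arguments. Unset Strict Implicit. Unset Printing Implicit Defensive.
Import Order.TTheory GRing.Theory Num.Theory.
Local Open Scope ring_scope.

Lemma mem_prefix (N : nat) (s : {perm 'I_N}) (j : nat) (y : 'I_N) :
  (y \in Defs.prefix s j) = ((s^-1)%g y < j)%N.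
Proof.
apply/imsetP/idP => [[i Hi ->]|H].
  by rewrite permK; move: Hi; rewrite inE.
by exists ((s^-1)%g y); rewrite ?inE ?permKV.
Qed.

Lemma prefixS (N : nat) (s : {perm 'I_N}) (v : 'I_N) :
  Defs.prefix s ((s^-1)%g v).+1 = v |: Defs.prefix s ((s^-1)%g v).
Proof.
apply/setP => y; rewrite in_setU1 !mem_prefix ltnS leq_eqVlt.
congr (_ || _).
by rewrite -[(_ == _)%N]/((s^-1)%g y == (s^-1)%g v) (inj_eq (@perm_inj _ _)).
Qed.

Lemma notin_prefix (N : nat) (s : {perm 'I_N}) (v : 'I_N) :
  v \notin Defs.prefix s ((s^-1)%g v).
Proof. by rewrite mem_prefix ltnn. Qed.

Lemma prefixN (N : nat) (s : {perm 'I_N}) : Defs.prefix s N = setT.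
Proof. by apply/setP => y; rewrite mem_prefix ltn_ord inE. Qed.

Lemma prefix0 (N : nat) (s : {perm 'I_N}) : Defs.prefix s 0 = set0.
Proof. by apply/setP => y; rewrite mem_prefix inE. Qed.

Section Main.
Variables (R : realFieldType) (N : nat) (f : {set 'I_N} -> R).
Hypothesis hmono : monotone_set f.
Hypothesis hsub : submodular f.

Lemma dimret (v : 'I_N) (A B : {set 'I_N}) : A \subset B -> v \notin B ->
  f (v |: B) - f B <= f (v |: A) - f A.
Proof.
move=> AB vB.
have := hsub (v |: A) B.
have -> : (v |: A) :|: B = v |: B.
  by rewrite -setUA (setUidPr AB).
have -> : (v |: A) :&: B = A.
  apply/setP => y; rewrite !inE; case: (eqVneq y v) => [->|_] /=.
    rewrite (negbTE vB); apply/esym/negbTE.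
    by apply: contra vB => /(subsetP AB).
  by apply/andP/idP => [[]|H] //; split => //; apply: (subsetP AB).
move=> H; lra.
Qed.

Lemma hvecE s v : hvec f s v = f (v |: Defs.prefix s ((s^-1)%g v)) - f (Defs.prefix s ((s^-1)%g v)).
Proof. by rewrite /hvec prefixS. Qed.

Lemma hvec_ub s v : f set0 = 0 -> hvec f s v <= f [set v].
Proof.
move=> h0; rewrite hvecE.
have := dimret (A := set0) (sub0set _) (notin_prefix s v).
by rewrite setU0 h0 subr0.
Qed.

Lemma hvec_lb s v : marg f v (~: [set v]) <= hvec f s v.
Proof.
rewrite hvecE /marg.
apply: dimret; last by rewrite !inE eqxx.
apply/subsetP => y Hy; rewrite !inE; apply/eqP => E; subst y.
by move: Hy; rewrite (negbTE (notin_prefix s v)).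
Qed.

Lemma sum_hvec s : \sum_v hvec f s v = f (Defs.prefix s N) - f (Defs.prefix s 0).
Proof.
rewrite (reindex_inj (@perm_inj _ s)) /=.
under eq_bigr => i _ do rewrite /hvec permK.
rewrite -(big_mkord xpredT (fun i => f (Defs.prefix s i.+1) - f (Defs.prefix s i))).
by rewrite telescope_sumr.
Qed.

End Main.

Lemma le_bigmax_seq (R : realFieldType) (I : eqType) (r : seq I) (F : I -> R) x0 j :
  j \in r -> F j <= \big[Num.max/x0]_(i <- r) F i.
Proof.
elim: r => [|a r IH] //; rewrite inE big_cons => /orP[/eqP->|H].
  by rewrite le_max lexx.
by rewrite le_max IH ?orbT.
Qed.

Lemma ge_bigmin_seq (R : realFieldType) (I : eqType) (r : seq I) (F : I -> R) x0 j :
  j \in r -> \big[Num.min/x0]_(i <- r) F i <= F j.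
Proof.
elim: r => [|a r IH] //; rewrite inE big_cons => /orP[/eqP->|H].
  by rewrite ge_min lexx.
by rewrite ge_min IH ?orbT.
Qed.

Theorem mainTheorem7 (R : realFieldType) (n : nat) (f : {set 'I_n.+1} -> R)
  (hmono : monotone_set f) (hsub : submodular f) (h0 : f set0 = 0)
  (x : 'I_n.+1 -> R) (hx : in01 x) (s : {perm 'I_n.+1}) :
  LBdiv f x s <= spread x * n.+1%:R * (max_single f - min_last_marg f) /\
  spread x * n.+1%:R * (max_single f - min_last_marg f)
    <= spread x * n.+1%:R * max_single f.
Proof.
set M := max_single f; set m := min_last_marg f; set e := spread x.
have HM : forall v, f [set v] <= M.
  by move=> v; apply: le_bigmax_seq; rewrite mem_index_enum.
have Hm : forall v, m <= marg f v (~: [set v]).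
  by move=> v; apply: ge_bigmin_seq; rewrite mem_index_enum.
have Hmarg : forall v A, 0 <= marg f v A.
  by move=> v A; rewrite /marg subr_ge0; apply: hmono; apply: subsetUr.
have Hm0 : 0 <= m.
  rewrite /m /min_last_marg; elim/big_rec: _ => [|i y _ Hy]; first exact: Hmarg.
  by rewrite le_min Hmarg Hy.
have He : forall i j, `|x i - x j| <= e.
  move=> i j; apply: (le_trans _ (le_bigmax_seq _ _ (mem_index_enum i))).
  exact: (le_bigmax_seq _ _ (mem_index_enum j)).
have He0 : 0 <= e by apply: le_trans (He ord0 ord0).
split; last first.
  by apply: ler_wpM2l; [apply: mulr_ge0 => //; apply: ler0n | lra].
set s1 := order_perm x.
have Hsum : \sum_v (hvec f s1 v - hvec f s v) = 0.
  rewrite sumrB !sum_hvec; by rewrite !prefixN !prefix0 subrr.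
have -> : LBdiv f x s = \sum_v (x v - x ord0) * (hvec f s1 v - hvec f s v).
  rewrite /LBdiv /lovasz /inner -sumrB.
  under [RHS]eq_bigr => v _ do rewrite mulrBl.
  rewrite [RHS]sumrB -[X in _ = _ - X]mulr_sumr Hsum mulr0 subr0.
  by apply: eq_bigr => v _; rewrite -mulrBr; reflexivity.
apply: le_trans (_ : \sum_(v : 'I_n.+1) e * (M - m) <= _).
  apply: ler_sum => v _.
  apply: le_trans (ler_norm _) _; rewrite normrM.
  apply: ler_pM => //.
  have := hvec_ub hsub s1 v h0; have := hvec_ub hsub s v h0.
  have := hvec_lb hsub s1 v; have := hvec_lb hsub s v.
  have := HM v; have := Hm v.
  move=> *; rewrite ler_norml; apply/andP; split; lra.
rewrite sumr_const card_ord le_eqVlt; apply/orP; left; apply/eqP.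
rewrite -[LHS]mulr_natr; ring.
Qed.
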